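(* Let $d\ge 2$ and let $V$ be a finite subset of the unit sphere $S^{d-1}\subset\mathbb{R}^d$ which is centrally symmetric, i.e. $v\in V$ implies $-v\in V$. Let $V^+$ be the set of vectors in $V$ whose first non-zero coordinate is positive, so that $V$ is the disjoint union of $V^+$ and $-V^+$. Let $\mathcal{A}\subseteq\mathbb{R}^d$ be a measurable set which is centrally antisymmetric, i.e. $\mathcal{A}\cap(-\mathcal{A})=\emptyset$. Let $T$ be a random orthogonal matrix uniformly distributed on $O(d)$ (normalized Haar measure), and let $(r_v)_{v\in V}$ be independent random variables, each with the $\chi$-distribution with $d$ degrees of freedom, independent of $T$. Define $$\hat p^V=\frac{1}{|V|}\sum_{v\in V} I_{\mathcal{A}}(r_v\,Tv),\qquad \hat p^V_{AT}=\frac{1}{|V|}\sum_{v\in V^+}\Big(I_{\mathcal{A}}(r_v\,Tv)+I_{\mathcal{A}}(-r_v\,Tv)\Big).$$ Then $\operatorname{Var}(\hat p^V_{AT})\le \operatorname{Var}(\hat p^V)$.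
   Context: $I_{\mathcal{A}}$ denotes the indicator function of $\mathcal{A}$. The $\chi$-distribution with $d$ degrees of freedom is the distribution of $\|Z\|$ for $Z$ a $d$-dimensional standard normal vector. Both $\hat p^V$ and $\hat p^V_{AT}$ are estimators of $P\{Z\in\mathcal{A}\}$ for $Z\sim N_d(0,I)$. *)

(* Defs.v *)
From HB Require Import structures.
From mathcomp Require Import all_boot all_order all_algebra.
From mathcomp Require Import all_classical all_reals all_analysis.

Set Implicit Arguments.
Unset Strict Implicit.
Unset Printing Implicit Defensive.

Import Order.TTheory GRing.Theory Num.Theory.
Local Open Scope classical_set_scope.
Local Open Scope ring_scope.

(* For m = 1 (column vectors)
   this is the Borel sigma-algebra of R^d; for m = d it is the Borel
   sigma-algebra of the matrix space R^(d x d). *)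
Definition mx_gen (R : realType) (n m : nat) : set (set 'M[R]_(n, m)) :=
  [set S | exists (i : 'I_n) (j : 'I_m) (B : set R),
             measurable B /\ S = [set M : 'M[R]_(n, m) | B (M i j)]].

Definition mx_measurable (R : realType) (n m : nat) (S : set 'M[R]_(n, m)) : Prop :=
  <<s (@mx_gen R n m) >> S.

Definition is_orthogonal (R : realType) (d : nat) (Q : 'M[R]_d) : Prop :=
  Q^T *m Q = 1%:M.

Definition on_sphere (R : realType) (d : nat) (v : 'cV[R]_d) : Prop :=
  \sum_(i < d) v i 0 ^+ 2 = 1.

Definition first_nz_pos (R : realType) (d : nat) (v : 'cV[R]_d) : bool :=
  [exists i : 'I_d, (0 < v i 0) && [forall j : 'I_d, (j < i)%N ==> (v j 0 == 0)]].

Definition Vplus (R : realType) (d : nat) (V : seq 'cV[R]_d) : seq 'cV[R]_d :=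
  [seq v <- V | first_nz_pos v].

Definition chi_kernel (R : realType) (d : nat) (x : R) : R :=
  if 0 < x then x ^+ d.-1 * expR (- (x ^+ 2) / 2) else 0.

Definition chi_norm_const (R : realType) (d : nat) : R :=
  fine (\int[@lebesgue_measure R]_(x in [set: R]) (chi_kernel d x)%:E)%E.

Definition chi_pdf (R : realType) (d : nat) (x : R) : R :=
  chi_kernel d x / chi_norm_const R d.

Definition chi_distributed (R : realType) (dO : measure_display)
    (Omega : measurableType dO) (P : probability Omega R) (d : nat)
    (X : Omega -> R) : Prop :=
  measurable_fun [set: Omega] X /\
  forall B : set R, measurable B ->
    P (X @^-1` B) = (\int[@lebesgue_measure R]_(x in B) (chi_pdf d x)%:E)%E.

(* T : Omega -> 'M_d is uniformly (normalized Haar) distributed on O(d):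
   T is a random element of O(d) whose law is invariant under left
   multiplication by every orthogonal matrix (this characterizes the
   normalized Haar measure on the compact group O(d)). *)
Definition haar_orthogonal (R : realType) (dO : measure_display)
    (Omega : measurableType dO) (P : probability Omega R) (d : nat)
    (T : Omega -> 'M[R]_d) : Prop :=
  (forall i j, measurable_fun [set: Omega] (fun w => T w i j)) /\
  (forall w, is_orthogonal (T w)) /\
  (forall Q : 'M[R]_d, is_orthogonal Q ->
     forall B : set 'M[R]_d, mx_measurable B ->
       P (T @^-1` B) = P ((fun w => Q *m T w) @^-1` B)).

(* Mutual independence of T and the family (r v)_(v in V) (V duplicate free):
   the product rule for all events generated by them. *)
Definition indep_mx_family (R : realType) (dO : measure_display)
    (Omega : measurableType dO) (P : probability Omega R) (d : nat)
    (T : Omega -> 'M[R]_d) (V : seq 'cV[R]_d) (r : 'cV[R]_d -> Omega -> R) : Prop :=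
  forall (B : set 'M[R]_d) (A : 'cV[R]_d -> set R),
    mx_measurable B -> (forall v, measurable (A v)) ->
    P (T @^-1` B `&` \bigcap_(v in [set` V]) (r v @^-1` A v)) =
    (P (T @^-1` B) * \prod_(v <- V) P (r v @^-1` A v))%E.

Definition p_hat (R : realType) (dO : measure_display) (Omega : measurableType dO)
    (d : nat) (A : set 'cV[R]_d) (V : seq 'cV[R]_d)
    (T : Omega -> 'M[R]_d) (r : 'cV[R]_d -> Omega -> R) : Omega -> R :=
  fun w => (size V)%:R^-1 * \sum_(v <- V) \1_A (r v w *: (T w *m v)).

Definition p_hat_AT (R : realType) (dO : measure_display) (Omega : measurableType dO)
    (d : nat) (A : set 'cV[R]_d) (V : seq 'cV[R]_d)
    (T : Omega -> 'M[R]_d) (r : 'cV[R]_d -> Omega -> R) : Omega -> R :=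
  fun w => (size V)%:R^-1 * \sum_(v <- Vplus V)
             (\1_A (r v w *: (T w *m v)) + \1_A (- (r v w *: (T w *m v)))).

(* Main.v *)
Require Import Defs.
From HB Require Import structures.
From mathcomp Require Import all_boot all_order all_algebra.
From mathcomp Require Import all_classical all_reals all_analysis.
From mathcomp Require Import measurable_realfun.

Import Order.TTheory GRing.Theory Num.Theory.
Local Open Scope classical_set_scope.
Local Open Scope ring_scope.

Section Types.
Variables (R : realType) (d : nat).
Definition MT := 'M[R]_d.
HB.instance Definition _ := Choice.on MT.
HB.instance Definition _ := isPointed.Build MT 0.
Definition Mt := @g_sigma_algebraType MT (@mx_gen R d d).
Definition T3 := (MT * R * R)%type.
HB.instance Definition _ := Choice.on T3.
HB.instance Definition _ := isPointed.Build T3 (0, 0, 0).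
Definition rect3 : set (set T3) :=
  [set S | exists B C D, mx_measurable B /\ measurable C /\ measurable D /\ S = B `*` C `*` D].
Definition X3 := g_sigma_algebraType rect3.

Lemma rect3_meas (B : set 'M[R]_d) (C D : set R) :
  mx_measurable B -> measurable C -> measurable D ->
  measurable (B `*` C `*` D : set X3).
Proof.
move=> mB mC mD; apply: sub_sigma_algebra; exists B, C, D; split => //.
Qed.

Lemma mcoord (i j : 'I_d) : measurable_fun [set: X3] (fun x : X3 => x.1.1 i j).
Proof.
move=> _ C mC; rewrite setTI.
have -> : (fun x : X3 => x.1.1 i j) @^-1` C =
   [set M : 'M[R]_d | C (M i j)] `*` setT `*` setT.
  by apply/seteqP; split => [x /= h|x /= [[h _] _]]; [split|].
apply: rect3_meas => //; apply: sub_sigma_algebra; by exists i, j, C.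
Qed.

Lemma mfst2 : measurable_fun [set: X3] (fun x : X3 => x.1.2).
Proof.
move=> _ C mC; rewrite setTI.
have -> : (fun x : X3 => x.1.2) @^-1` C = setT `*` C `*` setT.
  by apply/seteqP; split => [x /= h|x /= [[_ h] _]]; [split|].
apply: rect3_meas => //; exact: (@measurableT _ Mt).
Qed.

Lemma msnd : measurable_fun [set: X3] (fun x : X3 => x.2).
Proof.
move=> _ C mC; rewrite setTI.
have -> : (fun x : X3 => x.2) @^-1` C = setT `*` setT `*` C.
  by apply/seteqP; split => [x /= h|x /= [[_ _] h]].
apply: rect3_meas => //; exact: (@measurableT _ Mt).
Qed.

Definition CV := 'cV[R]_d.
HB.instance Definition _ := Choice.on CV.
HB.instance Definition _ := isPointed.Build CV 0.
Definition Ct := @g_sigma_algebraType CV (@mx_gen R d 1).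

Lemma mvec (u : 'cV[R]_d) (sel : X3 -> R) : measurable_fun [set: X3] sel ->
  forall A : set 'cV[R]_d, mx_measurable A ->
  measurable [set x : X3 | A (sel x *: (x.1.1 *m u))].
Proof.
move=> msel A mA.
have mphi : measurable_fun [set: X3] ((fun x : X3 => sel x *: (x.1.1 *m u)) : X3 -> Ct).
  apply: (@measurability _ _ X3 Ct _ _ (@mx_gen R d 1)) => //.
  move=> _ [_ [i [j [C [mC ->]]]] <-].
  rewrite setTI.
  have -> : (fun x : X3 => sel x *: (x.1.1 *m u)) @^-1` [set M | C (M i j)] =
    (fun x : X3 => sel x * \sum_k x.1.1 i k * u k j) @^-1` C.
    by apply/seteqP; split => x /=; rewrite !mxE.
  rewrite -[X in measurable X]setTI.
  apply: (measurable_realfun.measurable_funM msel) => //.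
  apply: measurable_sum => k.
  apply: measurable_realfun.measurable_funM; [exact: mcoord| exact: measurable_cst].
rewrite -[X in measurable X]setTI.
exact: (mphi measurableT (A : set Ct) mA).
Qed.

End Types.

Section Law.
Variables (R : realType) (d : nat) (V : seq 'cV[R]_d).
Variables (dO : measure_display) (Omega : measurableType dO) (P : probability Omega R).
Variables (T : Omega -> 'M[R]_d) (r : 'cV[R]_d -> Omega -> R).
Hypothesis uV : uniq V.
Hypothesis mTij : forall i j, measurable_fun [set: Omega] (fun w => T w i j).
Hypothesis chi : forall v, v \in V -> chi_distributed P d (r v).
Hypothesis ind : indep_mx_family P T V r.

Lemma mT : measurable_fun [set: Omega] (T : Omega -> Mt R d).
Proof.
apply: (@measurability _ _ Omega (Mt R d) _ _ (@mx_gen R d d)) => //.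
move=> _ [_ [i [j [C [mC ->]]]] <-].
have := mTij i j measurableT C mC.
by congr measurable; apply/seteqP; split => w.
Qed.

Definition f3 a b : Omega -> X3 R d := fun w => (T w, r a w, r b w).

Lemma mf3 a b : a \in V -> b \in V -> measurable_fun [set: Omega] (f3 a b).
Proof.
move=> aV bV.
apply: (@measurability _ _ Omega (X3 R d) _ _ (@rect3 R d)) => //.
move=> _ [_ [B [C [D [mB [mC [mD ->]]]]]] <-].
have -> : [set: Omega] `&` f3 a b @^-1` (B `*` C `*` D) =
   ((T : Omega -> Mt R d) @^-1` B `&` r a @^-1` C) `&` r b @^-1` D.
  by apply/seteqP; split => w /=; [move=> [_ [[]]]|move=> [[]]].
apply: measurableI; [apply: measurableI|].
- by rewrite -[X in measurable X]setTI; exact: mT.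
- by rewrite -[X in measurable X]setTI; case: (chi _ aV) => + _; exact.
- by rewrite -[X in measurable X]setTI; case: (chi _ bV) => + _; exact.
Qed.

Lemma rect_prob a b (B : set 'M[R]_d) (C D : set R) :
  a \in V -> b \in V -> a != b ->
  mx_measurable B -> measurable C -> measurable D ->
  P (f3 a b @^-1` (B `*` C `*` D)) =
  (P (T @^-1` B) * (\int[@lebesgue_measure R]_(x in C) (chi_pdf d x)%:E)
     * (\int[@lebesgue_measure R]_(x in D) (chi_pdf d x)%:E))%E.
Proof.
move=> aV bV ab mB mC mD.
pose Af v := if v == a then C else if v == b then D else setT.
have mAf v : measurable (Af v).
  by rewrite /Af; case: ifP => _ //; case: ifP => _ //.
have := ind B Af mB mAf.
have -> : T @^-1` B `&` \bigcap_(v in [set` V]) (r v @^-1` Af v) =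
    f3 a b @^-1` (B `*` C `*` D).
  apply/seteqP; split => w /=.
  - move=> [Bw H]; split; [split => //|].
    + by have := H a aV; rewrite /Af eqxx.
    + by have := H b bV; rewrite /Af eqxx eq_sym (negbTE ab).
  - move=> [[Bw Cw] Dw]; split => // v _; rewrite /Af.
    by case: ifP => [/eqP->|_] //; case: ifP => [/eqP->|_].
move=> ->.
rewrite (bigD1_seq a) //= -big_filter (bigD1_seq b) ?filter_uniq //; last first.
  by rewrite mem_filter eq_sym ab.
rewrite big_seq_cond big1 ?mule1; last first.
  move=> v /andP[]; rewrite mem_filter => /andP[va _] vb.
  rewrite /Af (negbTE va) (negbTE vb) preimage_setT.
  exact: probability_setT.
rewrite /Af eqxx eq_sym (negbTE ab) eqxx.
case: (chi _ aV) => _ ->//; case: (chi _ bV) => _ ->//.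
by rewrite /= mule1 muleA.
Qed.

Lemma law2 a b a' b' : a \in V -> b \in V -> a != b ->
  a' \in V -> b' \in V -> a' != b' ->
  forall S : set (X3 R d), measurable S ->
  P (f3 a b @^-1` S) = P (f3 a' b' @^-1` S).
Proof.
move=> aV bV ab aV' bV' ab' S mS.
pose m1 := distribution P (mfun_Sub (mem_set (mf3 _ _ aV bV))).
pose m2 := distribution P (mfun_Sub (mem_set (mf3 _ _ aV' bV'))).
have := @measure_unique _ R (X3 R d) (@rect3 R d) (fun _ => setT) erefl _ _ _ m1 m2 _ _ S mS.
apply.
- move=> X Y [B [C [D [mB [mC [mD ->]]]]]] [B' [C' [D' [mB' [mC' [mD' ->]]]]]].
  exists (B `&` B'), (C `&` C'), (D `&` D'); split.
    exact: (@measurableI _ (Mt R d)).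
  split; first exact: measurableI.
  split; first exact: measurableI.
  apply/seteqP; split => x /=.
    by move=> [[[? ?] ?] [[? ?] ?]].
  by move=> [[[? ?] [? ?]] [? ?]].
- move=> _; exists setT, setT, setT; split; first exact: (@measurableT _ (Mt R d)).
  by split => //; split => //; apply/seteqP; split.
- by rewrite bigcup_const.
- move=> X [B [C [D [mB [mC [mD ->]]]]]].
  change (P (f3 a b @^-1` (B `*` C `*` D)) = P (f3 a' b' @^-1` (B `*` C `*` D))).
  by rewrite !rect_prob.
- move=> _; change (P (f3 a b @^-1` setT) < +oo)%E.
  by rewrite preimage_setT probability_setT ltry.
Qed.

End Law.
Arguments f3 {R d dO Omega} T r a b _.
Arguments mf3 {R d V dO Omega P T r} mTij chi a b _ _.
Arguments law2 {R d V dO Omega P T r} uV mTij chi ind a b a' b'.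

Section Seq.
Variables (R : realType) (d : nat).

Lemma fnz_at (v : 'cV[R]_d) (i : 'I_d) : v i 0 != 0 ->
  (forall j : 'I_d, (j < i)%N -> v j 0 = 0) -> first_nz_pos v = (0 < v i 0).
Proof.
move=> vi0 lt0; apply/existsP/idP.
- case=> k /andP[vk /forallP H].
  have [ki|ik|ki] := ltngtP k i; last by move/val_inj: ki => <-.
  + by rewrite lt0 // ltxx in vk.
  + by have := H i; rewrite ik /= => /eqP vi; rewrite vi eqxx in vi0.
- move=> vi; exists i; rewrite vi /=; apply/forallP => j; apply/implyP => ji.
  by rewrite lt0.
Qed.

Lemma fnzN (v : 'cV[R]_d) : on_sphere v -> first_nz_pos (-v) = ~~ first_nz_pos v.
Proof.
move=> sv.
have [i0 vi0] : exists i, v i 0 != 0.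
  apply/existsP; apply: contraT; rewrite negb_exists => /forallP H.
  move: sv; rewrite /on_sphere big1 => [/eqP|i _]; first by rewrite eq_sym oner_eq0.
  by have := H i; rewrite negbK => /eqP ->; rewrite expr0n.
case: (@arg_minnP _ i0 (fun i : 'I_d => v i 0 != 0) (fun i : 'I_d => nat_of_ord i) vi0) => i vi imin.
have lt0 : forall j : 'I_d, (j < i)%N -> v j 0 = 0.
  move=> j ji; apply/eqP; apply: contraT => vj.
  by have := imin j vj; rewrite leqNgt ji.
rewrite (@fnz_at v i vi lt0) (@fnz_at (-v) i); last 2 first.
- by rewrite mxE oppr_eq0.
- by move=> j ji; rewrite mxE lt0 // oppr0.
rewrite mxE oppr_gt0.
by have [x0|x0|x0] := ltgtP (v i 0) 0; rewrite ?x0 ?eqxx in vi.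
Qed.

Lemma Vplus_perm (V : seq 'cV[R]_d) : uniq V ->
  (forall v, v \in V -> on_sphere v) -> (forall v, v \in V -> - v \in V) ->
  perm_eq V (Vplus V ++ map -%R (Vplus V)).
Proof.
move=> uV sV NV.
rewrite -(perm_filterC (@first_nz_pos R d) V) /Vplus perm_cat2l.
apply: uniq_perm.
- exact: filter_uniq.
- by rewrite map_inj_uniq ?filter_uniq //; exact: oppr_inj.
move=> x; rewrite mem_filter /=; apply/andP/mapP.
- move=> [px xV]; exists (- x); last by rewrite opprK.
  rewrite mem_filter fnzN; last exact: sV.
  by apply/andP; split => //; exact: NV.
- case=> y; rewrite mem_filter => /andP[py yV] ->.
  rewrite fnzN; last exact: sV.
  by rewrite py; split => //; exact: NV.
Qed.

Lemma Vplus_nopp (V : seq 'cV[R]_d) v w :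
  (forall v, v \in V -> on_sphere v) ->
  v \in Vplus V -> w \in Vplus V -> v != - w.
Proof.
move=> sV; rewrite !mem_filter => /andP[pv vV] /andP[pw wV].
apply/eqP => vw; move: pv; rewrite vw fnzN; [by rewrite pw | exact: sV].
Qed.

End Seq.
Arguments Vplus_perm {R d V}.
Arguments Vplus_nopp {R d V v w}.

Section Expect.
Variables (R : realType) (dO : measure_display) (Omega : measurableType dO) (P : probability Omega R).

Lemma Eind (c : R) (E : set Omega) : 0 <= c -> measurable E ->
  (\int[P]_w (c * \1_E w)%:E = c%:E * P E)%E.
Proof.
move=> c0 mE.
under eq_integral => w _ do rewrite EFinM.
rewrite ge0_integralZl //.
- by rewrite integral_indic // setIT.
all: try (by apply/measurable_EFinP; exact: measurable_indic).
all: try (by move=> w _; rewrite lee_fin indic_ge0).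
all: by apply/measurable_EFinP; exact: measurable_indic.
Qed.

Lemma bounded_L2 (f : Omega -> R) (M : R) : measurable_fun setT f ->
  (forall x, `|f x| <= M) -> f \in Lfun P 2%:E.
Proof.
move=> mf fM; rewrite inE; apply/andP; split; rewrite inE /=; first exact: mf.
rewrite /finite_norm unlock; apply: poweR_lty.
rewrite (_ : (fun x => _) = (fun x => ((`|f x|) ^+ 2)%:E))%E; last first.
  by apply/funext => x /=; rewrite powR_mulrn.
apply: (@le_lt_trans _ _ (\int[P]_x (cst ((M ^+ 2)%:E)) x))%E.
  apply: ge0_le_integral => //.
  - by apply/measurable_EFinP; apply: measurable_funX; exact: measurableT_comp.
  - by move=> x _; rewrite lee_fin /= lerXn2r ?nnegrE ?(le_trans _ (fM x)).
rewrite integral_cst // lte_mul_pinfty // ?lee_fin ?sqr_ge0 // ltey_eq fin_num_measure //.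
Qed.

Variables (I : Type) (W : seq I) (al be : I -> set Omega) (k : R).
Hypothesis mal : forall v, measurable (al v).
Hypothesis mbe : forall v, measurable (be v).
Hypothesis k0 : 0 <= k.

Definition gfun : Omega -> R := fun w => k * \sum_(v <- W) (\1_(al v) w + \1_(be v) w).

Lemma mgfun : measurable_fun setT gfun.
Proof.
apply: measurable_realfun.measurable_funM; first exact: measurable_cst.
apply: measurable_sum => v; apply: measurable_funD; exact: measurable_indic.
Qed.

Lemma gfun_L2 : gfun \in Lfun P 2%:E.
Proof.
apply: (@bounded_L2 _ (k * \sum_(v <- W) 2)); first exact: mgfun.
move=> x; rewrite /gfun normrM ger0_norm // ler_wpM2l //.
rewrite (le_trans (ler_norm_sum _ _ _)) // ler_sum // => v _.
have h (B : set Omega) : `|\1_B x : R| <= 1.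
  by rewrite /indic; case: (x \in B); rewrite ?normr1 ?normr0.
rewrite (le_trans (ler_normD _ _)) // (_ : 2 = 1 + 1) //.
exact: lerD.
Qed.

Lemma Eg1 : ('E_P[gfun] = \sum_(v <- W) (k%:E * P (al v) + k%:E * P (be v)))%E.
Proof.
rewrite unlock.
under eq_integral => w _ do rewrite /gfun mulr_sumr -sumEFin.
rewrite ge0_integral_sum //; last 2 first.
- move=> v; apply/measurable_EFinP.
  apply: measurable_realfun.measurable_funM; first exact: measurable_cst.
  by apply: measurable_funD; exact: measurable_indic.
- by move=> v w _; rewrite lee_fin mulr_ge0 // addr_ge0 // indic_ge0.
apply: eq_bigr => v _.
under eq_integral => w _ do rewrite mulrDr EFinD.
rewrite ge0_integralD //.
- by rewrite !Eind.
- by move=> w _; rewrite lee_fin mulr_ge0 // indic_ge0.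
- by apply/measurable_EFinP; apply: measurable_realfun.measurable_funM;
    (exact: measurable_cst || exact: measurable_indic).
- by move=> w _; rewrite lee_fin mulr_ge0 // indic_ge0.
- by apply/measurable_EFinP; apply: measurable_realfun.measurable_funM;
    (exact: measurable_cst || exact: measurable_indic).
Qed.

Ltac mt := repeat (first [ apply/measurable_EFinP | exact: measurable_cst
  | apply: measurable_funD | apply: measurable_realfun.measurable_funM
  | apply: measurable_sum => ?
  | apply: measurable_indic ; apply: measurableI ]).

Lemma Eind4 (c : R) A B C D : 0 <= c -> measurable A -> measurable B ->
  measurable C -> measurable D ->
  (\int[P]_w (c * \1_A w + c * \1_B w + c * \1_C w + c * \1_D w)%:E =
   c%:E * P A + c%:E * P B + c%:E * P C + c%:E * P D)%E.
Proof.
move=> c0 mA mB mC mD.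
have h0 (E : set Omega) w : (0 <= c * \1_E w)%R by rewrite mulr_ge0 ?indic_ge0.
under eq_integral => w _ do rewrite !EFinD.
rewrite ge0_integralD //; last 4 first.
- by move=> w _; rewrite !adde_ge0 // lee_fin.
- apply: emeasurable_funD; [apply: emeasurable_funD|];
   (apply/measurable_EFinP; apply: measurable_realfun.measurable_funM;
    [exact: measurable_cst|exact: measurable_indic]).
- by move=> w _; rewrite lee_fin.
- apply/measurable_EFinP; apply: measurable_realfun.measurable_funM;
    [exact: measurable_cst|exact: measurable_indic].
rewrite ge0_integralD //; last 4 first.
- by move=> w _; rewrite !adde_ge0 // lee_fin.
- apply: emeasurable_funD;
   (apply/measurable_EFinP; apply: measurable_realfun.measurable_funM;
    [exact: measurable_cst|exact: measurable_indic]).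
- by move=> w _; rewrite lee_fin.
- apply/measurable_EFinP; apply: measurable_realfun.measurable_funM;
    [exact: measurable_cst|exact: measurable_indic].
rewrite ge0_integralD //; last 4 first.
- by move=> w _; rewrite lee_fin.
- apply/measurable_EFinP; apply: measurable_realfun.measurable_funM;
    [exact: measurable_cst|exact: measurable_indic].
- by move=> w _; rewrite lee_fin.
- apply/measurable_EFinP; apply: measurable_realfun.measurable_funM;
    [exact: measurable_cst|exact: measurable_indic].
by rewrite !Eind.
Qed.

Lemma mci (c : R) (A : set Omega) : measurable A -> measurable_fun setT (cst c \* \1_A).
Proof.
move=> mA; apply: measurable_realfun.measurable_funM; first exact: measurable_cst.
exact: measurable_indic.
Qed.

Lemma mt4 (c : R) (A B C D : set Omega) : measurable A -> measurable B -> measurable C -> measurable D ->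
  measurable_fun setT (fun x : Omega => c * \1_A x + c * \1_B x + c * \1_C x + c * \1_D x).
Proof.
move=> mA mB mC mD.
rewrite (_ : (fun x => _) = (cst c \* \1_A) \+ (cst c \* \1_B) \+ (cst c \* \1_C) \+ (cst c \* \1_D)) //.
by apply: measurable_funD; [apply: measurable_funD; [apply: measurable_funD|]|]; exact: mci.
Qed.

Lemma Eg2 : ('E_P[gfun ^+ 2] = \sum_(v <- W) \sum_(u <- W)
   ((k ^+ 2)%:E * P (al v `&` al u) + (k ^+ 2)%:E * P (al v `&` be u) +
    (k ^+ 2)%:E * P (be v `&` al u) + (k ^+ 2)%:E * P (be v `&` be u)))%E.
Proof.
set c := k ^+ 2.
have c0 : 0 <= c by rewrite exprn_ge0.
have pw w : (gfun ^+ 2) w = \sum_(v <- W) \sum_(u <- W)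
   (c * \1_(al v `&` al u) w + c * \1_(al v `&` be u) w +
    c * \1_(be v `&` al u) w + c * \1_(be v `&` be u) w).
  have -> : (gfun ^+ 2) w = gfun w * gfun w by rewrite expr2.
  rewrite /gfun mulrACA -expr2 -/c big_distrlr /= mulr_sumr.
  apply: eq_bigr => v _; rewrite mulr_sumr; apply: eq_bigr => u _.
  rewrite !indicI /= mulrDl !mulrDr !addrA.
  by rewrite !mulrA.
rewrite unlock.
under eq_integral => w _ do rewrite pw -sumEFin.
have h0 (E : set Omega) w : (0 <= c * \1_E w)%R.
  by apply: mulr_ge0 => //; exact: indic_ge0.
rewrite ge0_integral_sum //; last 2 first.
- move=> v; apply/measurable_EFinP; apply: measurable_sum => u.
  by apply: mt4; exact: measurableI.
- by move=> v w _; rewrite lee_fin sumr_ge0 // => u _; rewrite !addr_ge0.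
apply: eq_bigr => v _.
under eq_integral => w _ do rewrite -sumEFin.
rewrite ge0_integral_sum //; last 2 first.
- move=> u; apply/measurable_EFinP.
  by apply: mt4; exact: measurableI.
- by move=> u w _; rewrite lee_fin !addr_ge0.
by apply: eq_bigr => u _; rewrite Eind4 //; exact: measurableI.
Qed.

End Expect.
Arguments gfun {R dO Omega I} W al be k _.

Section Main.
Variables (R : realType) (d : nat) (V : seq 'cV[R]_d) (A : set 'cV[R]_d).
Variables (dO : measure_display) (Omega : measurableType dO) (P : probability Omega R).
Variables (T : Omega -> 'M[R]_d) (r : 'cV[R]_d -> Omega -> R).
Hypothesis uV : uniq V.
Hypothesis sV : forall v, v \in V -> on_sphere v.
Hypothesis NV : forall v, v \in V -> - v \in V.
Hypothesis mA : mx_measurable A.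
Hypothesis asym : A `&` [set - x | x in A] = set0.
Hypothesis mTij : forall i j, measurable_fun [set: Omega] (fun w => T w i j).
Hypothesis chi : forall v, v \in V -> chi_distributed P d (r v).
Hypothesis ind : indep_mx_family P T V r.

Definition Ge (u z : 'cV[R]_d) : set Omega := [set w | A (r z w *: (T w *m u))].
Definition S1 (u : 'cV[R]_d) : set (X3 R d) := [set x | A (x.1.2 *: (x.1.1 *m u))].
Definition S2 (u : 'cV[R]_d) : set (X3 R d) := [set x | A (x.2 *: (x.1.1 *m u))].

Lemma mS1 u : measurable (S1 u).
Proof. exact: (@mvec R d u _ (@mfst2 R d) A mA). Qed.
Lemma mS2 u : measurable (S2 u).
Proof. exact: (@mvec R d u _ (@msnd R d) A mA). Qed.

Lemma Ge_pre1 u z z' : Ge u z = f3 T r z z' @^-1` S1 u.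
Proof. by []. Qed.
Lemma Ge_pre2 u u' z z' : Ge u z `&` Ge u' z' = f3 T r z z' @^-1` (S1 u `&` S2 u').
Proof. by []. Qed.

Lemma mGe u z : z \in V -> measurable (Ge u z).
Proof.
move=> zV; rewrite (Ge_pre1 u z z) -[X in measurable X]setTI.
exact: (mf3 mTij chi _ _ zV zV) (mS1 u).
Qed.

Lemma pairP u u' z z' z2 z2' : z \in V -> z' \in V -> z != z' ->
  z2 \in V -> z2' \in V -> z2 != z2' ->
  P (Ge u z `&` Ge u' z') = P (Ge u z2 `&` Ge u' z2').
Proof.
move=> *; rewrite !Ge_pre2; apply: (law2 uV mTij chi ind) => //.
exact: measurableI (mS1 u) (mS2 u').
Qed.

Lemma singP u z z' z2 z2' : z \in V -> z' \in V -> z != z' ->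
  z2 \in V -> z2' \in V -> z2 != z2' ->
  P (Ge u z) = P (Ge u z2).
Proof.
move=> *; rewrite (Ge_pre1 u z z') (Ge_pre1 u z2 z2').
by apply: (law2 uV mTij chi ind) => //; exact: mS1.
Qed.

Definition al v := if v \in V then Ge v v else set0.
Definition bb v := if v \in V then Ge (- v) (- v) else set0.
Definition cc v := if v \in V then Ge (- v) v else set0.

Lemma mal v : measurable (al v).
Proof. by rewrite /al; case: ifP => // vV; exact: mGe. Qed.
Lemma mbb v : measurable (bb v).
Proof. by rewrite /bb; case: ifP => // vV; apply: mGe; exact: NV. Qed.
Lemma mcc v : measurable (cc v).
Proof. by rewrite /cc; case: ifP => // vV; exact: mGe. Qed.

Lemma inW v : v \in Vplus V -> v \in V.
Proof. by rewrite mem_filter => /andP[]. Qed.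

Lemma p_hat_eq : p_hat A V T r = gfun (Vplus V) al bb (size V)%:R^-1.
Proof.
apply/funext => w; rewrite /p_hat /gfun; congr (_ * _).
rewrite (perm_big _ (Vplus_perm uV sV NV)) big_cat big_map /= [RHS]big_split /=.
congr (_ + _); rewrite big_seq [RHS]big_seq; apply: eq_bigr => v vW;
  have vV := inW _ vW; by rewrite /al /bb vV.
Qed.

Lemma p_hat_AT_eq : p_hat_AT A V T r = gfun (Vplus V) al cc (size V)%:R^-1.
Proof.
apply/funext => w; rewrite /p_hat_AT /gfun; congr (_ * _).
rewrite big_seq [RHS]big_seq; apply: eq_bigr => v vW.
have vV := inW _ vW.
have -> : - (r v w *: (T w *m v)) = r v w *: (T w *m - v) by rewrite mulmxN scalerN.
by rewrite /al /cc vV.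
Qed.

Lemma Pcb v : v \in Vplus V -> P (cc v) = P (bb v).
Proof.
move=> vW; have vV := inW _ vW; have nvV := NV _ vV.
have vnv : v != - v by exact: (Vplus_nopp sV vW vW).
rewrite /cc /bb vV.
apply: (@singP _ v (- v) (- v) v) => //; by rewrite eq_sym.
Qed.

Lemma Pac0 v : v \in Vplus V -> P (al v `&` cc v) = 0%E.
Proof.
move=> vW; have vV := inW _ vW.
rewrite /al /cc vV.
suff -> : Ge v v `&` Ge (- v) v = set0 by rewrite measure0.
apply/seteqP; split => // w [h1 h2]; move: h1 h2; rewrite /Ge /= mulmxN scalerN => h1 h2.
have : (A `&` [set - x | x in A]) (r v w *: (T w *m v)).
  by split => //; exists (- (r v w *: (T w *m v))) => //; rewrite opprK.
by rewrite asym.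
Qed.

Lemma main_ineq : ('V_P[p_hat_AT A V T r] <= 'V_P[p_hat A V T r])%E.
Proof.
have k0 : 0 <= (size V)%:R^-1 :> R by rewrite invr_ge0.
rewrite p_hat_eq p_hat_AT_eq !varianceE ?gfun_L2 //; try (exact: mal || exact: mbb || exact: mcc).
rewrite !Eg1 //; try (exact: mal || exact: mbb || exact: mcc).
rewrite !Eg2 //; try (exact: mal || exact: mbb || exact: mcc).
set k := (size V)%:R^-1.
have -> : (\sum_(v <- Vplus V) (k%:E * P (al v) + k%:E * P (cc v)) =
           \sum_(v <- Vplus V) (k%:E * P (al v) + k%:E * P (bb v)))%E.
  by rewrite big_seq [RHS]big_seq; apply: eq_bigr => v vW; rewrite Pcb.
apply: leeB => //.
rewrite big_seq [X in (_ <= X)%E]big_seq; apply: lee_sum => v vW.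
rewrite big_seq [X in (_ <= X)%E]big_seq; apply: lee_sum => u uW.
have k20 : (0 <= (k ^+ 2)%:E)%E by rewrite lee_fin exprn_ge0.
have vV := inW _ vW; have uV' := inW _ uW.
have nvV := NV _ vV; have nuV := NV _ uV'.
have [<-|vu] := eqVneq v u.
  rewrite Pac0 // (setIC (cc v)) Pac0 // (setIid (cc v)) Pcb // (setIid (bb v)) !mule0 !adde0.
  apply: leeD => //; rewrite -addeA leeDl // adde_ge0 // mule_ge0 //.
have vnu : v != - u by exact: (Vplus_nopp sV vW uW).
have unv : u != - v by exact: (Vplus_nopp sV uW vW).
have nvnu : - v != - u by rewrite (inj_eq oppr_inj).
rewrite /al /bb /cc vV uV'.
rewrite (@pairP v (- u) v u v (- u)) //.
rewrite (@pairP (- v) u v u (- v) u) //; last by rewrite eq_sym.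
rewrite (@pairP (- v) (- u) v u (- v) (- u)) //.
Qed.

End Main.

Theorem theorem2 (R : realType) (d : nat) (V : seq 'cV[R]_d)
    (A : set 'cV[R]_d)
    (dO : measure_display) (Omega : measurableType dO) (P : probability Omega R)
    (T : Omega -> 'M[R]_d) (r : 'cV[R]_d -> Omega -> R) :
  (2 <= d)%N ->
  uniq V ->
  (forall v, v \in V -> on_sphere v) ->
  (forall v, v \in V -> - v \in V) ->
  mx_measurable A ->
  A `&` [set - x | x in A] = set0 ->
  haar_orthogonal P T ->
  (forall v, v \in V -> chi_distributed P d (r v)) ->
  indep_mx_family P T V r ->
  ('V_P[p_hat_AT A V T r] <= 'V_P[p_hat A V T r])%E.
Proof.
move=> _ uV sV NV mA asym [mTij _] chi ind.
exact: main_ineq.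
Qed.
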